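(* Let $\mathsf{k}$ be a field of characteristic zero, $S=\mathsf{k}[x_1,\dots,x_n]$ with $n\ge2$, $R=\mathsf{k}[X_1,\dots,X_n]$ with $S$ acting by differentiation, $F\in R$ nonzero homogeneous of degree $d\ge2$, $A=S/\operatorname{Ann}_S(F)$ and $\ell\in S_1$. Let $\mathbf d=(\dim_{\mathsf{k}}A^{(0)},\dim_{\mathsf{k}}A^{(1)},\dots,\dim_{\mathsf{k}}A^{(d)})$ and $\mathbf n=(n_0,\dots,n_d)=\Delta^2\mathbf d$. Then the Jordan type of $\ell$ on $A$ is $$P_{\ell,A}=\big(\underbrace{d+1,\dots,d+1}_{n_d},\underbrace{d,\dots,d}_{n_{d-1}},\dots,\underbrace{2,\dots,2}_{n_1},\underbrace{1,\dots,1}_{n_0}\big).$$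
   Context: $x_i$ acts as $\partial/\partial X_i$; $\operatorname{Ann}_S(G)=\{g\in S:g\circ G=0\}$. $A^{(i)}:=S/\operatorname{Ann}_S(\ell^i\circ F)$ for $0\le i\le d$ (the zero algebra if $\ell^i\circ F=0$); $\dim_{\mathsf{k}}A^{(i)}$ is its total $\mathsf{k}$-dimension, and $\dim_{\mathsf{k}}A^{(i)}:=0$ for $i>d$. $\Delta^2\mathbf d(i)=\dim_{\mathsf{k}}A^{(i)}+\dim_{\mathsf{k}}A^{(i+2)}-2\dim_{\mathsf{k}}A^{(i+1)}$. The Jordan type $P_{\ell,A}$ is the partition of $\dim_{\mathsf{k}}A$ given by the sizes of the Jordan blocks of the nilpotent multiplication map $\times\ell:A\to A$. *)

(* Defs.v *)
From HB Require Import structures.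
From mathcomp Require Import all_boot all_order all_algebra.
From mathcomp Require Import mpoly.
From Stdlib Require Import ClassicalEpsilon.
Set Implicit Arguments. Unset Strict Implicit. Unset Printing Implicit Defensive.
Import Order.TTheory GRing.Theory Num.Theory.
Local Open Scope ring_scope.

Section Defs.
Variables (k : fieldType) (n : nat).
Local Notation S := {mpoly k[n]}.  (* S = k[x_1..x_n], also used for R = k[X_1..X_n] *)

(* contraction g o G : x_i acts as d/dX_i, i.e. x^m acts as the partial
   derivative of multi-index m *)
Definition contract (g G : S) : S :=
  \sum_(m <- msupp g) g@_m *: mderivm m G.

Definition annih (G g : S) : Prop := contract g G = 0.

Definition indep_mod (I : S -> Prop) (m : nat) (v : 'I_m -> S) : Prop :=
  forall c : 'I_m -> k, I (\sum_(j < m) c j *: v j) -> forall j, c j = 0.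

Definition qdim_is (I : S -> Prop) (m : nat) : Prop :=
  (exists v : 'I_m -> S, indep_mod I v) /\
  (forall m' (v : 'I_m' -> S), indep_mod I v -> (m' <= m)%N).

(* total k-dimension of S / I (finite in all uses below) *)
Definition qdim (I : S -> Prop) : nat :=
  epsilon (inhabits 0%N) (fun m => qdim_is I m).

(* dim_k A^(i), A^(i) = S / Ann_S(l^i o F), and 0 for i > d *)
Definition dimA (l F : S) (d i : nat) : nat :=
  if (i <= d)%N then qdim (annih (contract (l ^+ i) F)) else 0%N.

Definition d2dim (l F : S) (d i : nat) : int :=
  (dimA l F d i)%:Z + (dimA l F d i.+2)%:Z - 2 * (dimA l F d i.+1)%:Z.

(* The Jordan type of multiplication by l on A = S / Ann_S(F) is the partition
   P (listed as a sequence of block sizes): there is a Jordan basis of A for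
   the nilpotent map x l, made of strings v_j, l v_j, ..., l^(P_j - 1) v_j,
   with l^(P_j) v_j = 0 in A. *)
Definition jordan_type_is (l F : S) (P : seq nat) : Prop :=
  exists v : 'I_(size P) -> S,
    [/\ (forall j : 'I_(size P), annih F (l ^+ (nth 0%N P j) * v j)),
        (forall g : S, exists c : 'I_(size P) -> nat -> k,
            annih F (g - \sum_(j < size P) \sum_(t < nth 0%N P j)
                            c j t *: (l ^+ t * v j))) &
        (forall c : 'I_(size P) -> nat -> k,
            annih F (\sum_(j < size P) \sum_(t < nth 0%N P j)
                        c j t *: (l ^+ t * v j)) ->
            forall (j : 'I_(size P)) (t : nat), (t < nth 0%N P j)%N -> c j t = 0)].

End Defs.

(* Main.v *)
Require Import Defs.
From HB Require Import structures.
From mathcomp Require Import all_boot all_order all_algebra.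
From mathcomp Require Import mpoly.
From mathcomp Require Import ssrcomplements zify.
From Stdlib Require Import Classical ClassicalEpsilon FunctionalExtensionality.
Import Order.TTheory GRing.Theory Num.Theory.
Local Open Scope ring_scope.

Set Implicit Arguments. Unset Strict Implicit. Unset Printing Implicit Defensive.

Section Abs.
Variables (k : fieldType) (V : lmodType k).

Definition subsp (K : V -> Prop) :=
  K 0 /\ (forall a x y, K x -> K y -> K (a *: x + y)).

Definition indepO (K : V -> Prop) m (v : 'I_m -> V) : Prop :=
  forall c : 'I_m -> k, K (\sum_(j < m) c j *: v j) -> forall j, c j = 0.

Definition qdimis (K : V -> Prop) (m : nat) : Prop :=
  (exists v : 'I_m -> V, indepO K v) /\
  (forall m' (v : 'I_m' -> V), indepO K v -> (m' <= m)%N).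

Section Sub.
Variables (K : V -> Prop) (HK : subsp K).
Lemma subsp0 : K 0. Proof. by case: HK. Qed.
Lemma subspZ a x : K x -> K (a *: x).
Proof. by move=> Kx; rewrite -[a *: x]addr0; apply: HK.2 => //; apply: subsp0. Qed.
Lemma subspD x y : K x -> K y -> K (x + y).
Proof. by move=> Kx Ky; rewrite -[x]scale1r; apply: HK.2. Qed.
Lemma subspN x : K x -> K (- x).
Proof. by move=> Kx; rewrite -scaleN1r; apply: subspZ. Qed.
Lemma subspB x y : K x -> K y -> K (x - y).
Proof. by move=> Kx Ky; apply: subspD => //; apply: subspN. Qed.
Lemma subsp_sum (I : Type) (r : seq I) (P : pred I) (F : I -> V) :
  (forall i, P i -> K (F i)) -> K (\sum_(i <- r | P i) F i).
Proof.
move=> H; elim: r => [|x r IH]; first by rewrite big_nil; apply: subsp0.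
rewrite big_cons; case: ifP => // Px; exact: subspD (H _ Px) IH.
Qed.
Lemma subsp_eq x y : K (x - y) -> K x -> K y.
Proof. by move=> Hxy Kx; have := subspB Kx Hxy; rewrite opprB addrC subrK. Qed.
End Sub.

Lemma steinitz (I : V -> Prop) (T : finType) (B : T -> V) m (v : 'I_m -> V) :
  subsp I ->
  (forall g, exists a : T -> k, I (g - \sum_(x : T) a x *: B x)) ->
  indepO I v -> (m <= #|T|)%N.
Proof.
move=> HI span iv; rewrite leqNgt; apply/negP => ltm.
have [a Ha] := fin_all_exists (fun i : 'I_m => span (v i)).
pose M : 'M[k]_(m, #|T|) := \matrix_(i, j) a i (enum_val j).
have : kermx M != 0.
  by rewrite -mxrank_eq0 mxrank_ker subn_eq0 -ltnNge (leq_ltn_trans (rank_leq_col M)).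
case/rowV0Pn => z; rewrite sub_kermx => /eqP zM nz.
suff z0 : forall i, z 0 i = 0.
  by move/negP: nz; apply; apply/eqP/rowP => j; rewrite mxE z0.
apply: iv.
have H1 : I (\sum_(i < m) z 0 i *: (v i - \sum_(x : T) a i x *: B x)).
  by apply: subsp_sum => // i _; apply: subspZ.
suff <- : \sum_(i < m) z 0 i *: (v i - \sum_(x : T) a i x *: B x) =
          \sum_(i < m) z 0 i *: v i by [].
have E : \sum_(i < m) z 0 i *: (\sum_(x : T) a i x *: B x) = 0.
  under eq_bigr do rewrite scaler_sumr.
  rewrite exchange_big /= big1 // => x _.
  under eq_bigr do rewrite scalerA.
  rewrite -scaler_suml.
  have -> : \sum_(i < m) z 0 i * a i x = (z *m M) 0 (enum_rank x).
    by rewrite mxE; apply: eq_bigr => i _; rewrite mxE enum_rankK.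
  by rewrite zM mxE scale0r.
under eq_bigr do rewrite scalerBr.
by rewrite sumrB E subr0.
Qed.


Section Count.
Variables (I : V -> Prop) (HI : subsp I) (p : nat) (f : nat -> nat)
  (B : nat -> nat -> V).

Local Notation T := {j : 'I_p & 'I_(f j)}.
Let BT (x : T) := B (tag x) (tagged x).

Lemma sumT (c : nat -> nat -> k) :
  \sum_(j < p) \sum_(t < f j) c j t *: B j t =
  \sum_(x : T) c (tag x) (tagged x) *: BT x.
Proof.
exact: (@sig_big_dep _ 0 +%R 'I_p (fun j => 'I_(f j)) xpredT (fun _ => xpredT)
  (fun j t => c j t *: B j t)).
Qed.

Lemma cardT : #|{: T}| = (\sum_(j < p) f j)%N.
Proof.
rewrite card_tagged sumnE big_map big_enum /=.
by apply: eq_bigr => i _; rewrite card_ord.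
Qed.

Lemma count_qdim :
  (forall g, exists c : nat -> nat -> k,
      I (g - \sum_(j < p) \sum_(t < f j) c j t *: B j t)) ->
  (forall c : nat -> nat -> k,
      I (\sum_(j < p) \sum_(t < f j) c j t *: B j t) ->
      forall j t, (j < p)%N -> (t < f j)%N -> c j t = 0) ->
  qdimis I (\sum_(j < p) f j).
Proof.
move=> span ind.
have spanT : forall g, exists a : T -> k, I (g - \sum_(x : T) a x *: BT x).
  move=> g; have [c Hc] := span g.
  by exists (fun x : T => c (tag x) (tagged x)); rewrite -sumT.
have indT : forall a : T -> k, I (\sum_(x : T) a x *: BT x) -> forall x, a x = 0.
  move=> a Ha.
  pose c (j t : nat) := oapp (fun j' : 'I_p =>
      oapp (fun t' : 'I_(f j') => a (Tagged (fun j : 'I_p => 'I_(f j)) t')) 0 (insub t))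
      0 (insub j).
  have cE : forall x : T, c (tag x) (tagged x) = a x.
    case=> j t; rewrite /c /=; have h1 : insub (val j) = Some j := valK j; have h2 : insub (val t) = Some t := valK t; by rewrite h1 /= h2.
  have := ind c; rewrite sumT.
  under eq_bigr do rewrite cE.
  move=> /(_ Ha) H [j t]; rewrite -cE; exact: H.
rewrite -cardT; split.
  exists (fun i => BT (enum_val i)) => c0 Hc0 i.
  rewrite -(enum_valK i); apply: (indT (fun x => c0 (enum_rank x))).
  move: Hc0; rewrite (reindex (@enum_rank T)) /=; last first.
    by apply: onW_bij; apply: enum_rank_bij.
  by under eq_bigr do rewrite enum_rankK.
by move=> m' v iv; apply: (steinitz HI spanT iv).
Qed.
End Count.


Definition indepN (K : V -> Prop) p (y : nat -> V) :=
  forall c : nat -> k, K (\sum_(j < p) c j *: y j) -> forall j, (j < p)%N -> c j = 0.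
Definition FDN (K : V -> Prop) m :=
  forall p (y : 'I_p -> V), indepO K y -> (p <= m)%N.

Lemma indepN_bound K m p y : FDN K m -> indepN K p y -> (p <= m)%N.
Proof.
move=> FD iy; apply: (FD p (fun i : 'I_p => y i)) => c Hc i.
pose c' j := oapp c 0 (insub j).
have cE : forall i : 'I_p, c' i = c i.
  by move=> i0; rewrite /c'; have h : insub (val i0) = Some i0 := valK i0; rewrite h.
rewrite -cE; apply: iy => //; by under eq_bigr do rewrite cE.
Qed.

Section Ext.
Variables (K K1 : V -> Prop) (HK : subsp K) (HK1 : subsp K1)
  (KK1 : forall x, K x -> K1 x) (m : nat) (FD : FDN K m).

Lemma ext_step p (y : nat -> V) g :
  indepN K p y -> ~ (exists c : nat -> k, K (g - \sum_(j < p) c j *: y j)) ->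
  indepN K p.+1 (fun j => if j == p then g else y j).
Proof.
move=> iy ng c Hc.
rewrite big_ord_recr /= eqxx in Hc.
have E : \sum_(i < p) c i *: (if (i : nat) == p then g else y i) =
         \sum_(i < p) c i *: y i.
  by apply: eq_bigr => i _; rewrite (ltn_eqF (ltn_ord i)).
rewrite E in Hc.
have cp0 : c p = 0.
  have [//|cp] := eqVneq (c p) 0; exfalso; apply: ng.
  exists (fun j => - ((c p)^-1 * c j)).
  have -> : g - \sum_(j < p) - ((c p)^-1 * c j) *: y j =
            (c p)^-1 *: (\sum_(i < p) c i *: y i + c p *: g).
    rewrite scalerDr scalerA mulVf ?cp // scale1r scaler_sumr addrC.
    rewrite -sumrN; congr (_ + _); apply: eq_bigr => i _.
    by rewrite scaleNr opprK scalerA.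
  exact: subspZ.
move=> j; rewrite ltnS leq_eqVlt => /orP[/eqP -> //|ltjp].
rewrite cp0 scale0r addr0 in Hc; exact: (iy c Hc j ltjp).
Qed.

Lemma ext_basis f : forall p (y : nat -> V), (m - p <= f)%N ->
  (forall j, (j < p)%N -> K1 (y j)) -> indepN K p y ->
  exists q (w : nat -> V),
    [/\ forall j, (j < p)%N -> w j = y j,
        forall j, (p <= j < p + q)%N -> K1 (w j),
        indepN K (p + q) w &
        forall g, K1 g -> exists c : nat -> k, K (g - \sum_(j < p + q) c j *: w j)].
Proof.
elim: f => [|f IH] p y Hf Ky iy;
  (have [span|nspan] := classic (forall g, K1 g ->
      exists c : nat -> k, K (g - \sum_(j < p) c j *: y j));
   [exists 0%N, y; rewrite addn0; split => // j /andP[a b];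
      by move: (leq_trans b a); rewrite ltnn|]);
  (have [g [Kg ng]] : exists g, K1 g /\
      ~ exists c : nat -> k, K (g - \sum_(j < p) c j *: y j)
    by apply: NNPP => H; apply: nspan => g Kg; apply: NNPP => H2; apply: H; exists g);
  have iy' := ext_step iy ng;
  have lepm : (p.+1 <= m)%N := indepN_bound FD iy'.
  by move: Hf; rewrite leqn0 subn_eq0 => Hmp; move: (leq_trans lepm Hmp); rewrite ltnn.
set y' := fun j => _ in iy'.
have Hf' : (m - p.+1 <= f)%N.
  by rewrite subnS -ltnS prednK ?subn_gt0 //.
have Ky' : forall j, (j < p.+1)%N -> K1 (y' j).
  move=> j; rewrite /y'; case: eqP => [_ _|njp]; first exact: Kg.
  by rewrite ltnS leq_eqVlt => /orP[/eqP //|/Ky].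
have [q [w [wy Kw iw sw]]] := IH p.+1 y' Hf' Ky' iy'.
exists q.+1, w; rewrite -addSnnS; split => //.
- by move=> j ljp; rewrite wy ?(ltn_trans ljp) // /y' (ltn_eqF ljp).
- move=> j /andP[pj jq]; have [->|npj] := eqVneq j p.
    by rewrite wy // /y' eqxx.
  by apply: Kw; rewrite jq andbT ltn_neqAle eq_sym npj.
Qed.
End Ext.


Section Jordan.
Variable (L : {linear V -> V}).

Definition Lp t x := iter t L x.
Lemma Lp0 t : Lp t 0 = 0.
Proof. by elim: t => //= t IH; rewrite /Lp /= -/(Lp t 0) IH linear0. Qed.
Lemma LpDx t x y : Lp t (x + y) = Lp t x + Lp t y.
Proof. by elim: t => //= t IH; rewrite /Lp /= -!/(Lp t _) IH linearD. Qed.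
Lemma LpZ t a x : Lp t (a *: x) = a *: Lp t x.
Proof. by elim: t => //= t IH; rewrite /Lp /= -!/(Lp t _) IH linearZ. Qed.
Lemma Lp_sum t (I : Type) (r : seq I) (P : pred I) (F : I -> V) :
  Lp t (\sum_(i <- r | P i) F i) = \sum_(i <- r | P i) Lp t (F i).
Proof. exact: (big_morph _ (LpDx t) (Lp0 t)). Qed.
Lemma LpS t x : Lp t.+1 x = L (Lp t x). Proof. by []. Qed.
Lemma LpSr t x : Lp t.+1 x = Lp t (L x). Proof. by rewrite /Lp iterSr. Qed.
Lemma LpD s t x : Lp (s + t) x = Lp s (Lp t x). Proof. by rewrite /Lp iterD. Qed.

Definition stab (K : V -> Prop) := forall x, K x -> K (L x).
Lemma stabLp K t x : stab K -> K x -> K (Lp t x).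
Proof. by move=> sK; elim: t => //= t IH /IH; apply: sK. Qed.

Definition dsum P (c : nat -> nat -> k) (v : nat -> V) :=
  \sum_(j < size P) \sum_(t < nth 0%N P j) c j t *: Lp t (v j).

Definition JB K P v := [/\
  forall j, (j < size P)%N -> K (Lp (nth 0%N P j) (v j)),
  forall g, exists c, K (g - dsum P c v) &
  forall c, K (dsum P c v) -> forall j t, (j < size P)%N -> (t < nth 0%N P j)%N -> c j t = 0].

Lemma nthP_lt (P' : seq nat) q j : (j < size P')%N ->
  nth 0%N (map S P' ++ nseq q 1%N) j = (nth 0%N P' j).+1.
Proof. by move=> jp; rewrite nth_cat size_map jp (nth_map 0%N). Qed.

Lemma nthP_ge (P' : seq nat) q j : (size P' <= j)%N -> (j < size P' + q)%N ->
  nth 0%N (map S P' ++ nseq q 1%N) j = 1%N.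
Proof.
move=> pj jq; rewrite nth_cat size_map ltnNge pj /= nth_nseq.
by rewrite ltn_subLR // jq.

Qed.

Lemma dsum_cat (P' : seq nat) q (u w : nat -> V) c :
  dsum (map S P' ++ nseq q 1%N) c (fun j => if (j < size P')%N then u j else w j) =
  \sum_(j < size P') (\sum_(t < nth 0%N P' j) c j t *: Lp t (u j)
                      + c j (nth 0%N P' j) *: Lp (nth 0%N P' j) (u j))
  + \sum_(j < q) c (size P' + j)%N 0%N *: w (size P' + j)%N.
Proof.
rewrite /dsum size_cat size_map size_nseq big_split_ord /=.
congr (_ + _); apply: eq_bigr => j _ /=.
  by rewrite nthP_lt // ltn_ord big_ord_recr.
rewrite nthP_ge ?leq_addr ?ltn_add2l // big_ord1 ltnNge leq_addr /=.
by [].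
Qed.

Lemma sum_split_w p q (e : nat -> k) (w : nat -> V) :
  \sum_(j < p + q) e j *: w j =
  \sum_(j < p) e j *: w j + \sum_(j < q) e (p + j)%N *: w (p + j)%N.
Proof. by rewrite big_split_ord. Qed.

Lemma flat_pos (cnt : nat -> nat) s x :
  x \in flatten [seq nseq (cnt i) i.+1 | i <- s] -> (0 < x)%N.
Proof.
case/flattenP => t /mapP[i _ ->]; rewrite mem_nseq => /andP[_ /eqP->] //.
Qed.

Lemma flat_step (cnt' : nat -> nat) N q :
  map S (flatten [seq nseq (cnt' i) i.+1 | i <- rev (iota 0 N)]) ++ nseq q 1%N =
  flatten [seq nseq ((fun i => if i is i'.+1 then cnt' i' else q) i) i.+1
          | i <- rev (iota 0 N.+1)].
Proof.
rewrite -[N.+1]add1n iotaD /= rev_cons -cats1 map_cat flatten_cat /= cats0.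
congr (_ ++ _); rewrite map_flatten -map_comp (iotaDl 1 0 N) -map_rev -map_comp.
by congr flatten; apply: eq_map => i /=; rewrite map_nseq.
Qed.

Lemma jordan_exists N : forall K, subsp K -> stab K -> (exists m, FDN K m) ->
  (forall x, K (Lp N x)) ->
  exists P v (cnt : nat -> nat), JB K P v /\
    P = flatten [seq nseq (cnt i) i.+1 | i <- rev (iota 0 N)].
Proof.
elim: N => [|N IH] K HK sK [m FD] nil.
  exists [::], (fun _ => 0), (fun _ => 0%N); split => //; split => //.
  by move=> g; exists (fun _ _ => 0); rewrite /dsum big_ord0 subr0; apply: (nil g).
pose K' x := K (L x).
have HK' : subsp K'.
  split; first by rewrite /K' linear0; apply: subsp0.
  by move=> a x y Kx Ky; rewrite /K' linearP; apply: HK.2.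
have sK' : stab K' by move=> x; apply: sK.
have FD' : FDN K' m.
  move=> p y iy; apply: (FD p (fun i => L (y i))) => c Hc; apply: iy.
  by rewrite /K' linear_sum; under eq_bigr do rewrite linearZ.
have nil' : forall x, K' (Lp N x) by move=> x; apply: (nil x).
have [P' [u [cnt' [[Ju1 Ju2 Ju3] EP']]]] := IH K' HK' sK' (ex_intro _ m FD') nil'.
set p := size P'.
have pos : forall j, (j < p)%N -> (0 < nth 0%N P' j)%N.
  by move=> j jp; apply: (@flat_pos cnt' (rev (iota 0 N))); rewrite -EP' mem_nth.
pose y j := Lp (nth 0%N P' j) (u j).
have Ky : forall j, (j < p)%N -> K' (y j) by [].
have iy : indepN K p y.
  move=> a Ha j jp.
  have := Ju3 (fun j t => if t == (nth 0%N P' j).-1 then a j else 0).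
  have E : dsum P' (fun j t => if t == (nth 0%N P' j).-1 then a j else 0) u =
           \sum_(j < p) a j *: Lp (nth 0%N P' j).-1 (u j).
    apply: eq_bigr => i _; have := pos i (ltn_ord i).
    case: (nth 0%N P' i) => // b _ /=; rewrite big_ord_recr /= eqxx big1 ?add0r //.
    by move=> t _; rewrite (ltn_eqF (ltn_ord t)) scale0r.
  rewrite E => H.
  have : K' (\sum_(j < p) a j *: Lp (nth 0%N P' j).-1 (u j)).
    rewrite /K' linear_sum; move: Ha; congr K; apply: eq_bigr => i _.
    rewrite linearZ /= -LpS prednK //; exact: pos.
  move/H => /(_ j (nth 0%N P' j).-1 jp); rewrite eqxx; apply.
  by rewrite prednK ?pos.
have [q [w [wy Kw iw sw]]] := ext_basis HK FD (leq_subr p m) Ky iy.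
pose v j := if (j < p)%N then u j else w j.
exists (map S P' ++ nseq q 1%N), v, (fun i => if i is i'.+1 then cnt' i' else q).
split; last by rewrite EP' flat_step.
have sizeP : size (map S P' ++ nseq q 1%N) = (p + q)%N.
  by rewrite size_cat size_map size_nseq.
split.
- move=> j; rewrite sizeP => jpq; rewrite /v; case: ltnP => jp.
    by rewrite nthP_lt // LpS; apply: Ju1.
  by rewrite nthP_ge //; apply: Kw; rewrite jp.
- move=> g; have [c Hc] := Ju2 g.
  have [e He] := sw _ Hc.
  exists (fun j t => if (j < p)%N then (if (t < nth 0%N P' j)%N then c j t else e j) else e j).
  rewrite dsum_cat -/p.
  suff -> : \sum_(j < p) (\sum_(t < nth 0%N P' j)
       (if (j < p)%N then (if (t < nth 0%N P' j)%N then c j t else e j) else e j) *: Lp t (u j) +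
     (if (j < p)%N then (if (nth 0%N P' j < nth 0%N P' j)%N then c j (nth 0%N P' j) else e j) else e j)
        *: Lp (nth 0%N P' j) (u j)) +
    \sum_(j < q) (if (p + j < p)%N then (if (0 < nth 0%N P' (p + j))%N then c (p + j)%N 0%N else e (p + j)%N) else e (p + j)%N) *: w (p + j)%N
    = dsum P' c u + \sum_(j < p + q) e j *: w j.
    by rewrite opprD addrA.
  rewrite sum_split_w addrA big_split /=; congr (_ + _ + _).
  + apply: eq_bigr => j _; rewrite ltn_ord; apply: eq_bigr => t _; by rewrite ltn_ord.
  + by apply: eq_bigr => j _; rewrite ltn_ord ltnn wy.
  + by apply: eq_bigr => j _; rewrite ltnNge leq_addr.
- move=> c Hc.
  rewrite dsum_cat -/p in Hc.
  have HA : K' (dsum P' c u).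
    have HK1 : K' (\sum_(j < p) (\sum_(t < nth 0%N P' j) c j t *: Lp t (u j) +
                c j (nth 0%N P' j) *: Lp (nth 0%N P' j) (u j)) +
               \sum_(j < q) c (p + j)%N 0%N *: w (p + j)%N) by apply: sK.
    rewrite big_split /= in HK1.
    apply: (subsp_eq HK' _ HK1); rewrite /dsum -/p (_ : forall a b c0 : V, a + b + c0 - a = b + c0); last by move=> a b c0; by rewrite addrAC (addrC a b) addrK.
    apply: subspD => //; apply: subsp_sum => // j _; apply: subspZ => //.
      exact: Ky.
    by apply: Kw; rewrite leq_addr ltn_add2l ltn_ord.
  have c0 := Ju3 c HA.
  have He : K (\sum_(j < p + q) (if (j < p)%N then c j (nth 0%N P' j) else c j 0%N) *: w j).
    move: Hc; congr K; rewrite big_split_ord /=; congr (_ + _).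
      rewrite (eq_bigr (fun j : 'I_p => c j (nth 0%N P' j) *: Lp (nth 0%N P' j) (u j))).
        by apply: eq_bigr => j _; rewrite ltn_ord wy.
      move=> j _; rewrite big1 ?add0r // => t _; rewrite c0 ?scale0r //.
    by apply: eq_bigr => j _; rewrite ltnNge leq_addr.
  move=> j t; rewrite sizeP => jpq; case: (ltnP j p) => jp.
    rewrite nthP_lt // ltnS leq_eqVlt => /orP[/eqP->|tp]; last exact: c0.
    by have := iw (fun j => if (j < p)%N then c j (nth 0%N P' j) else c j 0%N) He j jpq; rewrite jp.
  rewrite nthP_ge // ltnS leqn0 => /eqP->.
  by have := iw (fun j => if (j < p)%N then c j (nth 0%N P' j) else c j 0%N) He j jpq; rewrite ltnNge jp.
Qed.


Lemma sum_shift (b i : nat) (F : nat -> V) (c : nat -> k) : (i <= b)%N ->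
  \sum_(t < b) (if (i <= t)%N then c (t - i)%N else 0) *: F t =
  \sum_(t < b - i) c t *: F (i + t)%N.
Proof.
move=> h; rewrite -[in LHS](subnKC h) big_split_ord /= big1 ?add0r.
  by apply: eq_bigr => t _; rewrite leq_addr addKn.
by move=> t _; rewrite leqNgt ltn_ord scale0r.
Qed.

Lemma qdim_JB K P v i : subsp K -> stab K -> JB K P v ->
  qdimis (fun g => K (Lp i g)) (\sum_(j < size P) (nth 0%N P j - i)).
Proof.
move=> HK sK [J1 J2 J3].
have HI : subsp (fun g => K (Lp i g)).
  split; first by rewrite Lp0; apply: subsp0.
  by move=> a x y Kx Ky; rewrite LpDx LpZ; apply: HK.2.
apply: (@count_qdim _ HI (size P) (fun j => nth 0%N P j - i)%N (fun j t => Lp t (v j))).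

  move=> g; have [c Hc] := J2 g; exists c.
  pose D2 := \sum_(j < size P) \sum_(t < nth 0%N P j)
      (if (t < nth 0%N P j - i)%N then 0 else c j t *: Lp t (v j)).
  have E : dsum P c v = \sum_(j < size P) \sum_(t < nth 0%N P j - i) c j t *: Lp t (v j) + D2.
    rewrite /D2 -big_split /=; apply: eq_bigr => j _.
    rewrite (big_ord_widen _ (fun t => c j t *: Lp t (v j)) (leq_subr i _)) [X in _ = X + _]big_mkcond.
    rewrite -big_split /=; apply: eq_bigr => t _; by case: ifP; rewrite ?addr0 ?add0r.
  have -> : g - \sum_(j < size P) \sum_(t < nth 0%N P j - i) c j t *: Lp t (v j) =
            (g - dsum P c v) + D2 by rewrite E opprD addrA subrK.
  apply: (subspD HI); first exact: stabLp.
  rewrite /D2 Lp_sum; apply: (subsp_sum HK) => j _; rewrite Lp_sum; apply: (subsp_sum HK) => t _.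
  case: ifP => ht.
    by rewrite Lp0; apply: subsp0.
  rewrite LpZ; apply: subspZ => //; rewrite -LpD.
  have hP : (nth 0%N P j <= i + t)%N by rewrite -leq_subLR leqNgt ht.
  rewrite -(subnK hP) LpD; apply: stabLp => //; exact: J1.
move=> c Hc j t jP tf.
have := J3 (fun j t => if (i <= t)%N then c j (t - i)%N else 0).
have E : dsum P (fun j t => if (i <= t)%N then c j (t - i)%N else 0) v =
         Lp i (\sum_(j < size P) \sum_(t < nth 0%N P j - i) c j t *: Lp t (v j)).
  rewrite Lp_sum; apply: eq_bigr => j0 _; rewrite Lp_sum.
  have [h|h] := leqP i (nth 0%N P j0).
    rewrite (sum_shift (fun t => Lp t (v j0))) //.
    by apply: eq_bigr => t0 _; rewrite LpZ LpD.
  have -> : (nth 0%N P j0 - i = 0)%N by apply/eqP; rewrite subn_eq0 ltnW.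
  rewrite big_ord0 big1 // => t0 _; rewrite leqNgt (ltn_trans (ltn_ord t0) h) scale0r //.
rewrite E => /(_ Hc j (i + t)%N jP); rewrite leq_addr addKn; apply.
by rewrite -ltn_subRL.
Qed.

End Jordan.

End Abs.

Section MP.
Variables (k : fieldType) (n : nat).
Local Notation S := {mpoly k[n]}.
Implicit Types (g h G : S).

Lemma contractwE D g G : (msize g <= D)%N ->
  contract g G = \sum_(m : 'X_{1..n < D}) g@_m *: mderivm m G.
Proof.
move=> le_gD; rewrite /contract (big_mksub 'X_{1..n < D}) //=; first last.
- by move=> x /msize_mdeg_lt /leq_trans; apply.
- by rewrite msupp_uniq.
by rewrite big_rmcond //= => i /memN_msupp_eq0 ->; rewrite scale0r.
Qed.

Lemma contractP a g h G : contract (a *: g + h) G = a *: contract g G + contract h G.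
Proof.
pose D := maxn (msize (a *: g + h)) (maxn (msize g) (msize h)).
have h1 : (msize (a *: g + h) <= D)%N by rewrite leq_maxl.
have h2 : (msize g <= D)%N by rewrite /D (leq_trans (leq_maxl _ (msize h))) ?leq_maxr.
have h3 : (msize h <= D)%N by rewrite /D (leq_trans (leq_maxr (msize g) _)) ?leq_maxr.
rewrite (contractwE _ h1) (contractwE _ h2) (contractwE _ h3).
rewrite scaler_sumr -big_split /=; apply: eq_bigr => m _.
by rewrite mcoeffD mcoeffZ scalerDl scalerA.
Qed.

Lemma contract0 G : contract 0 G = 0.
Proof. by rewrite /contract msupp0 big_nil. Qed.
Lemma contractD g h G : contract (g + h) G = contract g G + contract h G.
Proof. by have := contractP 1 g h G; rewrite !scale1r. Qed.
Lemma contractZ a g G : contract (a *: g) G = a *: contract g G.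
Proof. by have := contractP a g 0 G; rewrite !addr0 contract0 addr0. Qed.
Lemma contractB g h G : contract (g - h) G = contract g G - contract h G.
Proof. by have := contractP (-1) h g G; rewrite !scaleN1r addrC [in RHS]addrC. Qed.
Lemma contract_sum (I : Type) (r : seq I) (P : pred I) (F : I -> S) G :
  contract (\sum_(i <- r | P i) F i) G = \sum_(i <- r | P i) contract (F i) G.
Proof. exact: (big_morph (fun x => contract x G) (fun x y => contractD x y G) (contract0 G)). Qed.

Lemma contractX m G : contract 'X_[m] G = mderivm m G.
Proof. by rewrite /contract msuppX big_seq1 mcoeffX eqxx scale1r. Qed.

Lemma contractG0 g : contract g 0 = 0.
Proof. by rewrite /contract big1 // => m _; rewrite linear0 scaler0. Qed.

Lemma contractGP g a G H : contract g (a *: G + H) = a *: contract g G + contract g H.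
Proof.
rewrite /contract scaler_sumr -big_split /=; apply: eq_bigr => m _.
by rewrite linearP scalerDr !scalerA mulrC.
Qed.

Lemma contractG_sum g (I : Type) (r : seq I) (P : pred I) (F : I -> S) :
  contract g (\sum_(i <- r | P i) F i) = \sum_(i <- r | P i) contract g (F i).
Proof.
apply: (big_morph (contract g)) => [x y|]; last exact: contractG0.
by have := contractGP g 1 x y; rewrite !scale1r.
Qed.

Lemma contractM g h G : contract (g * h) G = contract g (contract h G).
Proof.
pose D := maxn (msize g) (msize h).
have h2 : (msize g <= D)%N by rewrite leq_maxl.
have h3 : (msize h <= D)%N by rewrite leq_maxr.
rewrite (mpolywME h2 h3) contract_sum (contractwE _ h2) (contractwE _ h3).
rewrite -(pair_bigA _ (fun (m1 m2 : 'X_{1..n < D}) => contract ((g@_m1 * h@_m2) *: 'X_[m1 + m2]) G)) /=; apply: eq_bigr => m1 _.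
rewrite raddf_sum scaler_sumr /=; apply: eq_bigr => m2 _.
by rewrite contractZ contractX mderivmZ scalerA (addmC (val m1)) mderivmDm.
Qed.

Lemma mderivm_van m G : (forall m', m' \in msupp G -> (mdeg m' < mdeg m)%N) ->
  mderivm m G = 0.
Proof.
move=> H; rewrite mderivmE big_seq big1 // => m' /H lt.
have [i hi] : exists i : 'I_n, (m' i < m i)%N.
  apply: NNPP => Hn; move: lt; rewrite !mdegE ltnNge => /negP; apply.
  apply: leq_sum => j _; rewrite leqNgt; apply/negP => hj; apply: Hn; by exists j.
by rewrite (bigD1 i) //= ffact_small // mul0n mulr0 scale0r.
Qed.

Lemma contract_van g G : (forall m m', m \in msupp g -> m' \in msupp G ->
   (mdeg m' < mdeg m)%N) -> contract g G = 0.
Proof.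
move=> H; rewrite /contract big_seq big1 // => m hm.
by rewrite mderivm_van ?scaler0 // => m'; apply: H.
Qed.

End MP.

Lemma term_id (a i : nat) :
  ((a.+1 - i) + (a.+1 - i.+2) = 2 * (a.+1 - i.+1) + (a == i))%N.
Proof. have [->|ne] := eqVneq a i; first lia. move/eqP: ne => ne; lia. Qed.

Lemma sum_flat (cnt : nat -> nat) N i :
  (\sum_(j < size (flatten [seq nseq (cnt i') i'.+1 | i' <- rev (iota 0 N)]))
     (nth 0 (flatten [seq nseq (cnt i') i'.+1 | i' <- rev (iota 0 N)]) j - i) =
  \sum_(i' < N) cnt i' * (i'.+1 - i))%N.
Proof.
set P := flatten _.
have -> : (\sum_(j < size P) (nth 0 P j - i) = \sum_(x <- P) (x - i))%N.
  by rewrite (big_nth 0%N) big_mkord.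
rewrite big_flatten /= big_map big_rev -(big_mkord xpredT (fun i' => cnt i' * (i'.+1 - i))%N).
rewrite /index_iota subn0; apply: eq_bigr => i' _.
by rewrite big_nseq iter_addn addn0 mulnC.
Qed.

Lemma d2_id (cnt : nat -> nat) N i : (i < N)%N ->
  ((\sum_(i' < N) cnt i' * (i'.+1 - i)) + (\sum_(i' < N) cnt i' * (i'.+1 - i.+2))
   = 2 * (\sum_(i' < N) cnt i' * (i'.+1 - i.+1)) + cnt i)%N.
Proof.
move=> iN; rewrite -big_split /= big_distrr /=.
have -> : cnt i = (\sum_(i' < N) cnt i' * (nat_of_ord i' == i))%N.
  rewrite (bigD1 (Ordinal iN)) //= eqxx muln1 big1 ?addn0 // => j hj.
  by rewrite (_ : (j == i :> nat) = false) ?muln0 //; apply/negbTE; move: hj; apply: contra => /eqP h; apply/eqP/val_inj.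
rewrite -big_split /=; apply: eq_bigr => j _.
by rewrite -!mulnDr term_id mulnDr mulnCA.
Qed.

Unset Implicit Arguments.

Theorem proposition3p14 (k : fieldType) (n : nat) (F l : {mpoly k[n]}) (d : nat) :
  [pchar k] =i pred0 ->
  (2 <= n)%N ->
  (2 <= d)%N ->
  F != 0 -> F \is d.-homog ->
  l \is 1.-homog ->
  (forall i, (i <= d)%N -> 0 <= d2dim l F d i) /\
  jordan_type_is l F
    (flatten [seq nseq `|d2dim l F d i|%N i.+1 | i <- rev (iota 0 d.+1)]).
Proof.
move=> _ _ _ _ Fh lh.
pose L : {linear {mpoly k[n]} -> {mpoly k[n]}} := l \*o idfun.
have LpE : forall t x, Lp L t x = l ^+ t * x.
  elim=> [x|t IH x]; first by rewrite mul1r.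
  by rewrite LpS IH /= exprS mulrA.
pose K := fun g : {mpoly k[n]} => contract g F = 0.
have HK : subsp K.
  split; first exact: contract0.
  by move=> a x y Kx Ky; rewrite /K contractP Kx Ky scaler0 addr0.
have sK : stab L K.
  by move=> x Kx; rewrite /K /= contractM Kx contractG0.
have FD : exists m, FDN K m.
  exists #|{: 'X_{1..n < msize F}}| => p y iy.
  apply: (steinitz (B := fun x : 'X_{1..n < msize F} => 'X_[val x]) HK _ iy) => g.
  exists (fun x : 'X_{1..n < msize F} => g@_x); rewrite /K; apply: contract_van => m m' hm hm'.
  apply: (leq_trans (msize_mdeg_lt hm')); rewrite leqNgt; apply/negP => lt.
  move: hm; rewrite mcoeff_msupp mcoeffB.
  rewrite (mcoeff_mpoly (fun m => g@_m)) // subrr eqxx //.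
have nil : forall x, K (Lp L d.+1 x).
  move=> x; rewrite /K LpE mulrC contractM.
  suff -> : contract (l ^+ d.+1) F = 0 by rewrite contractG0.
  apply: contract_van => m m' hm hm'.
  have hl := dhomogMn d.+1 lh.
  rewrite (dhomog_mf hl hm) (dhomog_mf Fh hm') mul1n //.
have [P [v [cnt [JBP EP]]]] := jordan_exists HK sK FD nil.
have Pbound : forall x, x \in P -> (x <= d.+1)%N.
  move=> x; rewrite EP => /flattenP[s /mapP[i' hi' ->]].
  rewrite mem_nseq => /andP[_ /eqP->]; move: hi'; rewrite mem_rev mem_iota //.
have dimE : forall i, dimA l F d i = (\sum_(j < size P) (nth 0 P j - i))%N.
  move=> i; rewrite /dimA; case: leqP => hi; last first.
    rewrite big1 // => j _; apply/eqP; rewrite subn_eq0.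
    exact: leq_trans (Pbound _ (mem_nth 0%N (ltn_ord j))) hi.
  have -> : annih (contract (l ^+ i) F) = (fun g => K (Lp L i g)).
    by apply: functional_extensionality => g; rewrite /annih /K LpE mulrC contractM.
  have Hq := qdim_JB i HK sK JBP.
  rewrite /qdim; set e := epsilon _ _.
  have He : qdim_is (fun g => K (Lp L i g)) e.
    by apply: epsilon_spec; exists (\sum_(j < size P) (nth 0 P j - i))%N; exact: Hq.
  case: He => [[v1 iv1] b1]; case: Hq => [[v2 iv2] b2].
  by apply/eqP; rewrite eqn_leq (b2 _ v1 iv1) (b1 _ v2 iv2).
have Hcnt : forall i, (i <= d)%N -> d2dim l F d i = (cnt i)%:Z.
  move=> i hi; rewrite /d2dim !dimE EP !sum_flat.
  have := @d2_id cnt d.+1 i hi.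
  lia.
have EP2 : flatten [seq nseq `|d2dim l F d i|%N i.+1 | i <- rev (iota 0 d.+1)] = P.
  rewrite EP; congr flatten; apply/eq_in_map => i; rewrite mem_rev mem_iota => /andP[_ hi].
  by rewrite Hcnt // absz_nat.
split; first by move=> i hi; rewrite Hcnt.
rewrite EP2; case: JBP => J1 J2 J3.
exists (fun j : 'I_(size P) => v j); split.
- by move=> j; rewrite /annih -LpE; exact: J1 j (ltn_ord j).
- move=> g; have [c Hc] := J2 g; exists (fun j t => c j t); move: Hc.
  rewrite /K /annih /dsum; congr (contract (g - _) F = 0).
  by apply: eq_bigr => j _; apply: eq_bigr => t _; rewrite LpE.
- move=> c Hc j t tP.
  pose c' (j t : nat) := oapp (fun j' : 'I_(size P) => c j' t) 0 (insub j).
  have cE : forall (j : 'I_(size P)) t, c' j t = c j t.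
    by move=> j0 t0; rewrite /c'; have h : insub (val j0) = Some j0 := valK j0; rewrite h.
  rewrite -cE; apply: (J3 c') => //.
  move: Hc; rewrite /annih /K /dsum; congr (contract _ F = 0).
  by apply: eq_bigr => j0 _; apply: eq_bigr => t0 _; rewrite LpE cE.
Qed.
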